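(* Let $\mathcal{H}$ be a finite-dimensional complex Hilbert space and let $U,V$ be unitary operators on $\mathcal{H}$ satisfying $V^{-1}U^2V=U^3$. Then $UV^{-1}UV=V^{-1}UVU$. *)

(* Defs.v *)
(* Finite-dimensional complex Hilbert spaces are modelled as
   C^n with the standard inner product, operators as n x n matrices over a
   numClosedFieldType C (e.g. algC), unitarity via mathcomp's spectral.unitarymx. *)
From HB Require Import structures.
From mathcomp Require Import all_boot all_order all_algebra.
From mathcomp Require Export spectral.
Set Implicit Arguments. Unset Strict Implicit. Unset Printing Implicit Defensive.

(* Main.v *)
Require Import Defs.
From HB Require Import structures.
From mathcomp Require Import all_boot all_order all_algebra.
From mathcomp Require Import spectral zify.
Import GRing.Theory Num.Theory.
Local Open Scope ring_scope.

Lemma conj_pow (R : comUnitRingType) n (P A : 'M[R]_n) k : P \in unitmx ->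
  (invmx P *m A *m P) ^+ k = invmx P *m A ^+ k *m P.
Proof.
move=> Pu; elim: k => [|k IH].
  by rewrite !expr0 mulmx1 mulVmx.
by rewrite !exprSr IH -!mulmxE !mulmxA mulmxK.
Qed.

Lemma diag_pow (R : comPzRingType) n (d : 'rV[R]_n) k :
  diag_mx d ^+ k = diag_mx (\row_j (d 0 j ^+ k)).
Proof.
elim: k => [|k IH].
  rewrite expr0 -[1]/(1%:M) -diag_const_mx; congr diag_mx; apply/rowP => j; rewrite !mxE //.
rewrite exprSr IH -mulmxE mulmx_diag; congr diag_mx; apply/rowP => j; rewrite !mxE exprSr.
by [].
Qed.

Lemma det_shift (R : comUnitRingType) n (P A : 'M[R]_n) (l : R) : P \in unitmx ->
  \det (invmx P *m A *m P - l%:M) = \det (A - l%:M).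
Proof.
move=> Pu.
have -> : invmx P *m A *m P - l%:M = invmx P *m (A - l%:M) *m P.
  by rewrite mulmxBr mulmxBl scalar_mxC mulmxKV.
rewrite !det_mulmx det_inv mulrAC mulVr ?mul1r //.
Qed.

Lemma det_diag_shift (R : comPzRingType) n (d : 'rV[R]_n) l :
  \det (diag_mx d - l%:M) = \prod_k (d 0 k - l).
Proof.
have -> : diag_mx d - l%:M = diag_mx (\row_k (d 0 k - l)).
  apply/matrixP => i j; rewrite !mxE; case: eqP => [->|_]; by rewrite ?mulr1n ?mulr0n ?subr0.
by rewrite det_diag; apply: eq_bigr => k _; rewrite mxE.
Qed.

Lemma rootsU (C : idomainType) n (x : 'I_n -> C) (nz : forall i, x i != 0)
  (h32 : forall i, exists j, x i ^+ 3 = x j ^+ 2) i :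
  exists M, ((0 < M)%N && (x i ^+ M == 1)).
Proof.
have [f hf] := fin_all_exists h32.
have hit m : x i ^+ (3 ^ m) = x (iter m f i) ^+ (2 ^ m).
  elim: m => [|m IH]; first by rewrite !expn0.
  rewrite expnSr exprM IH -exprM mulnC exprM hf -exprM mulnC -expnSr //.
pose g (m : 'I_n.+1) := iter m f i.
have : ~~ injectiveb g.
  apply/negP => /injectiveP inj; have := leq_card g inj; by rewrite !card_ord ltnn.
move/injectivePn => [m1 [m2 ne eq]].
wlog lt : m1 m2 ne eq / (m1 < m2)%N.
  move=> W; case: (ltngtP m1 m2) => h; first exact: (W m1 m2).
  - apply: (W m2 m1) => //; by rewrite eq_sym.
  - by move: ne; rewrite (val_inj h) eqxx.
set p := (m2 - m1)%N.
have p0 : (0 < p)%N by rewrite subn_gt0.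
have em2 : (m2 : nat) = (m1 + p)%N by rewrite subnKC // ltnW.
set y := x (g m1).
set z := x i ^+ (3 ^ m1).
have zy : z = y ^+ (2 ^ m1) by rewrite /z hit.
have e2 : x i ^+ (3 ^ m2) = y ^+ (2 ^ m2) by rewrite hit /y -/(g m2) -eq.
have zz : z ^+ (3 ^ p) = z ^+ (2 ^ p).
  by rewrite /z -exprM -expnD -em2 e2 (hit m1) -exprM -expnD -em2.
have zn : z ^+ (2 ^ p) != 0 by rewrite !expf_neq0.
have le : (2 ^ p <= 3 ^ p)%N by rewrite ltnW // ltn_exp2r.
exists (3 ^ m1 * (3 ^ p - 2 ^ p))%N; apply/andP; split.
  by rewrite muln_gt0 expn_gt0 /= subn_gt0 ltn_exp2r.
rewrite exprM -/z; apply/eqP; apply: (mulIf zn).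
by rewrite -exprD subnK // zz mul1r.
Qed.

Lemma common_exp (C : idomainType) n (x : 'I_n -> C)
  (h : forall i, exists M, ((0 < M)%N && (x i ^+ M == 1))) :
  exists2 M, (0 < M)%N & forall i, x i ^+ M = 1.
Proof.
have [F hF] := fin_all_exists h.
exists (\prod_i F i)%N.
  by apply: prodn_gt0 => i; case/andP: (hF i).
move=> j; rewrite (bigD1 j) //= exprM; case/andP: (hF j) => _ /eqP ->.
by rewrite expr1n.
Qed.

Lemma reduce (C : idomainType) n (x : 'I_n -> C)
  (h32 : forall i, exists j, x i ^+ 3 = x j ^+ 2)
  (h23 : forall i, exists j, x i ^+ 2 = x j ^+ 3) M :
  (0 < M)%N -> (forall i, x i ^+ M = 1) ->
  exists N, [/\ (0 < N)%N, ~~ (2 %| N)%N, ~~ (3 %| N)%N & forall i, x i ^+ N = 1].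
Proof.
elim/ltn_ind: M => M IH M0 hM.
case: (boolP (2 %| M)%N) => [/dvdnP [k Mk] | n2].
  apply: (IH k); [lia | lia | ].
  move=> i; have [j hj] := h32 i.
  have h3 : x i ^+ (3 * k) = 1 by rewrite exprM hj -exprM mulnC -Mk hM.
  have : x i ^+ (3*k) = x i ^+ k * x i ^+ (2*k) by rewrite -exprD; congr (_ ^+ _); lia.
  by rewrite h3 mulnC -Mk hM mulr1 => <-.
case: (boolP (3 %| M)%N) => [/dvdnP [k Mk] | n3].
  apply: (IH k); [lia | lia | ].
  move=> i; have [j hj] := h23 i.
  have h2 : x i ^+ (2 * k) = 1 by rewrite exprM hj -exprM mulnC -Mk hM.
  have : x i ^+ (3*k) = x i ^+ k * x i ^+ (2*k) by rewrite -exprD; congr (_ ^+ _); lia.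
  by rewrite h2 mulnC -Mk hM mulr1 => <-.
by exists M.
Qed.

Theorem theorem1 (C : numClosedFieldType) (n : nat) (U V : 'M[C]_n)
  (hU : U \is unitarymx) (hV : V \is unitarymx)
  (hrel : invmx V *m (U *m U) *m V = U *m U *m U) :
  U *m invmx V *m U *m V = invmx V *m U *m V *m U.
Proof.
have Uu := unitarymx_unit hU; have Vu := unitarymx_unit hV.
have Un : U \is normalmx.
  by apply/normalmxP; rewrite (unitarymxP hU) -(invmx_unitary hU) mulVmx.
have hUd : U = invmx (spectralmx U) *m diag_mx (spectral_diag U) *m spectralmx U.
  exact/orthomx_spectralP.
set P := spectralmx U in hUd; set d := spectral_diag U in hUd.
have Pu : P \in unitmx := spectral_unit U.
have powU m : U ^+ m = invmx P *m diag_mx (\row_k (d 0 k ^+ m)) *m P.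
  by rewrite {1}hUd conj_pow // diag_pow.
have detU m l : \det (U ^+ m - l%:M) = \prod_k (d 0 k ^+ m - l).
  rewrite powU det_shift // det_diag_shift; apply: eq_bigr => k _; by rewrite mxE.
have W2 : invmx V *m U ^+ 2 *m V = U ^+ 3.
  by rewrite expr2 exprS expr2 -!mulmxE hrel mulmxA.
have eqdet l : \det (U ^+ 2 - l%:M) = \det (U ^+ 3 - l%:M).
  by rewrite -W2 det_shift.
have h32 i : exists j, d 0 i ^+ 3 = d 0 j ^+ 2.
  have : \prod_k (d 0 k ^+ 2 - d 0 i ^+ 3) == 0.
    rewrite -detU eqdet detU; apply/prodf_eq0; exists i => //; by rewrite subrr.
  case/prodf_eq0 => j _; rewrite subr_eq0 => /eqP e; exists j; by rewrite e.
have h23 i : exists j, d 0 i ^+ 2 = d 0 j ^+ 3.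
  have : \prod_k (d 0 k ^+ 3 - d 0 i ^+ 2) == 0.
    rewrite -detU -eqdet detU; apply/prodf_eq0; exists i => //; by rewrite subrr.
  case/prodf_eq0 => j _; rewrite subr_eq0 => /eqP e; exists j; by rewrite e.
have nz i : d 0 i != 0.
  have : \prod_k (d 0 k ^+ 1 - 0) != 0.
    rewrite -detU expr1.
    have -> : (0 : C)%:M = 0 :> 'M_n by apply/matrixP => a b; rewrite !mxE mul0rn.
    by rewrite subr0 -unitfE -unitmxE.
  by move/prodf_neq0 => /(_ i isT); rewrite expr1 subr0.
have [M M0 hM] := @common_exp _ _ (fun i => d 0 i) (@rootsU _ _ (fun i => d 0 i) nz h32).
have [N [N0 N2 N3 hN]] := @reduce _ _ (fun i => d 0 i) h32 h23 M M0 hM.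
have UN : U ^+ N = 1.
  rewrite powU; have -> : \row_k d 0 k ^+ N = const_mx 1 by apply/rowP => k; rewrite !mxE.
  by rewrite diag_const_mx mulmx1 mulVmx.
have [k3 [a3 e3]] : exists k a, (3 * k = a * N + 1)%N.
  have : (N %% 3 = 1 \/ N %% 3 = 2)%N by lia.
  case=> h.
  - exists (2 * (N %/ 3) + 1)%N, 2%N; lia.
  - exists (N %/ 3 + 1)%N, 1%N; lia.
have [k2 [a2 e2]] : exists k a, (2 * k = a * N + 1)%N.
  have h : (N %% 2 = 1)%N by lia.
  exists (N %/ 2 + 1)%N, 1%N; lia.
have key W : W ^+ N = 1 -> W ^+ 2 = U ^+ 3 -> U * W = W * U.
  move=> WN W23.
  have hU' : U = (U ^+ 3) ^+ k3.
    by rewrite -exprM e3 exprD mulnC exprM UN expr1n mul1r expr1.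
  have hW' : W = (U ^+ 3) ^+ k2.
    by rewrite -W23 -exprM e2 exprD mulnC exprM WN expr1n mul1r expr1.
  by rewrite {1 2}hU' hW' -!exprD addnC.
have := key (invmx V *m U *m V).
rewrite conj_pow // UN mulmx1 mulVmx // conj_pow // W2 => /(_ erefl erefl).
by rewrite -!mulmxE !mulmxA.
Qed.
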